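(* Fix an integer $k\geq1$ and $V=\{0,\ldots,k\}$. If a Boolean function $\varphi$ on $V$ satisfies $\mathrm{eul}(\varphi)=0$, then $\varphi\simeq\bot$.
   Context: A valuation is a subset $\nu\subseteq V$; $\nu^{(l)}$ is $\nu$ with membership of $l$ flipped. A Boolean function on $V$ is a map $\varphi:2^V\to\{\text{false},\text{true}\}$; $\mathrm{sat}(\varphi)$ is its set of satisfying valuations; $\mathrm{eul}(\varphi)=\sum_{\nu\in\mathrm{sat}(\varphi)}(-1)^{|\nu|}$; $\bot$ is the constant-false function. Write $\varphi\xrightarrow{+(\nu,l)}\varphi'$ if $\nu,\nu^{(l)}\notin\mathrm{sat}(\varphi)$ and $\mathrm{sat}(\varphi')=\mathrm{sat}(\varphi)\cup\{\nu,\nu^{(l)}\}$, and $\varphi\xrightarrow{-(\nu,l)}\varphi'$ if $\varphi'\xrightarrow{+(\nu,l)}\varphi$. Write $\varphi\xrightarrow{\pm}\varphi'$ if one of these holds for some $\nu,l$; $\simeq$ is the reflexive-transitive closure of $\xrightarrow{\pm}$ (an equivalence relation). *)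

(* Defs.v *)
From mathcomp Require Import all_boot all_order all_algebra.
From Stdlib Require Import Relations.
Set Implicit Arguments. Unset Strict Implicit. Unset Printing Implicit Defensive.
Import GRing.Theory Num.Theory.

(* Variables V = {0,...,k} are represented by the finite type 'I_(k.+1).
   A valuation is a subset nu : {set 'I_(k.+1)}.
   A Boolean function is a map phi : {set 'I_(k.+1)} -> bool. *)

Section BoolFun.
Variable k : nat.
Notation V := 'I_(k.+1).

Definition bfun := {set V} -> bool.

Definition flip (nu : {set V}) (l : V) : {set V} :=
  if l \in nu then nu :\ l else l |: nu.

Definition sat (phi : bfun) : {set {set V}} := [set nu | phi nu].

Definition eul (phi : bfun) : int :=
  (\sum_(nu in sat phi) (-1) ^+ #|nu|)%R.

Definition bot : bfun := fun _ => false.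

Definition step_plus (nu : {set V}) (l : V) (phi phi' : bfun) : Prop :=
  nu \notin sat phi /\ flip nu l \notin sat phi /\
  sat phi' = sat phi :|: [set nu; flip nu l].

Definition step_minus (nu : {set V}) (l : V) (phi phi' : bfun) : Prop :=
  step_plus nu l phi' phi.

Definition step_pm (phi phi' : bfun) : Prop :=
  exists nu l, step_plus nu l phi phi' \/ step_minus nu l phi phi'.

Definition bequiv : bfun -> bfun -> Prop := clos_refl_trans bfun step_pm.
End BoolFun.

(* Main.v *)
Require Import Defs.
From mathcomp Require Import all_boot all_order all_algebra.
From Stdlib Require Import Relations.
Import GRing.Theory Num.Theory.

Set Implicit Arguments. Unset Strict Implicit.

Section Proof.
Variable k : nat.
Notation V := 'I_(k.+1).

Definition sd (x y : {set V}) : {set V} := [set z | (z \in x) != (z \in y)].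

Lemma in_sd x y z : (z \in sd x y) = ((z \in x) != (z \in y)).
Proof. by rewrite inE. Qed.

Lemma in_flip (x : {set V}) l z : (z \in flip x l) = ((z == l) != (z \in x)).
Proof.
rewrite /flip; case: ifP => H; rewrite !inE; case: (eqVneq z l) => [->|] //=;
  rewrite ?H //; by case: (z \in x).
Qed.

Lemma sd_flip x y l : sd (flip x l) y = flip (sd x y) l.
Proof.
apply/setP=> z; rewrite in_sd !in_flip in_sd.
by case: (z == l); case: (z \in x); case: (z \in y).
Qed.

Lemma card_flip (s : {set V}) l :
  #|flip s l| = if l \in s then #|s|.-1 else #|s|.+1.
Proof.
rewrite /flip; case: ifP => H.
  by rewrite [in RHS](cardsD1 l s) H.
by rewrite cardsU1 H.
Qed.

Lemma sd_neq u v z : z \in sd u v -> u != v.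
Proof. by rewrite in_sd; apply: contraTneq => ->; rewrite eqxx. Qed.

Lemma add_edge (f g : bfun k) u l w : w = flip u l -> ~~ f u -> ~~ f w ->
  (forall z, g z = [|| f z, z == u | z == w]) -> bequiv f g.
Proof.
move=> Hw fu fw Hg; apply: rt_step; exists u, l; left.
rewrite /step_plus -Hw; split; [by rewrite inE|split; first by rewrite inE].
by apply/setP=> z; rewrite !inE Hg orbA.
Qed.

Lemma remove_edge (f g : bfun k) u l w : w = flip u l -> ~~ g u -> ~~ g w ->
  (forall z, f z = [|| g z, z == u | z == w]) -> bequiv f g.
Proof.
move=> Hw fu fw Hg; apply: rt_step; exists u, l; right.
rewrite /step_minus /step_plus -Hw; split; [by rewrite inE|split; first by rewrite inE].
by apply/setP=> z; rewrite !inE Hg orbA.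
Qed.

Lemma bequiv_sym (f g : bfun k) : bequiv f g -> bequiv g f.
Proof.
elim=> [x y [nu [l [H|H]]]| x | x y z _ H1 _ H2].
- by apply: rt_step; exists nu, l; right.
- by apply: rt_step; exists nu, l; left.
- exact: rt_refl.
- exact: rt_trans H2 H1.
Qed.

Lemma bequiv_trans (f g h : bfun k) : bequiv f g -> bequiv g h -> bequiv f h.
Proof. exact: rt_trans. Qed.

Ltac bsimp := repeat match goal with
 | H : is_true (?u != ?v) |- context[?u == ?v] => rewrite (negbTE H)
 end.

Ltac spec_tac := let z := fresh "z" in move=> z /=;
  repeat (bsimp; rewrite ?eqxx /=;
   match goal with |- context[?u == ?p] =>
    is_var u; let H := fresh "H" in case: (eqVneq u p) => [->|H] end);
  bsimp; rewrite ?eqxx /=;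
  repeat match goal with
   | H : ?e = true |- context[?e] => rewrite H
   | H : ?e = false |- context[?e] => rewrite H end;
  rewrite /= ?orbT ?orbF ?andbT ?andbF //=;
  try by case: (_ _).

Ltac side := rewrite /= ?eqxx; bsimp;
  repeat match goal with
   | H : ?e = true |- context[?e] => rewrite H
   | H : ?e = false |- context[?e] => rewrite H end;
  rewrite /= ?orbT ?orbF ?andbT ?andbF //.

Lemma main n : forall (f g : bfun k) x y, #|sd x y| = n.*2.+1 -> ~~ f x -> ~~ f y ->
  (forall z, g z = [|| f z, z == x | z == y]) -> bequiv f g.
Proof.
elim: n => [|n IH] f g x y Hd fx fy Hg.
  have /cards1P [l Hl] : #|sd x y| == 1 by rewrite Hd.
  have Hy : y = flip x l.
    apply/setP=> z; rewrite in_flip; have := in_sd x y z; rewrite Hl inE => ->.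
    by case: (z \in x); case: (z \in y).
  by apply: (add_edge (l := l) Hy) => //; rewrite -Hy.
have [l Hl] : exists l, l \in sd x y by apply/set0Pn; rewrite -card_gt0 Hd.
have [a Ha] : exists a, a = flip x l by eexists.
have da : #|sd a y| = n.*2.+2 by rewrite Ha sd_flip card_flip Hl Hd.
have [l' Hl'] : exists l', l' \in sd a y by apply/set0Pn; rewrite -card_gt0 da.
have [b Hb] : exists b, b = flip a l' by eexists.
have db : #|sd b y| = n.*2.+1 by rewrite Hb sd_flip card_flip Hl' da.
have xy : x != y by exact: sd_neq Hl.
have ay : a != y by exact: sd_neq Hl'.
have [l'' Hl''] : exists l'', l'' \in sd b y by apply/set0Pn; rewrite -card_gt0 db.
have b_y : b != y by exact: sd_neq Hl''.
have ll' : l != l'.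
  by apply/eqP=> E; move: Hl'; rewrite -E Ha sd_flip in_flip eqxx Hl.
have xa : x != a.
  by apply/eqP=> E; have := in_flip x l l; rewrite -Ha -E eqxx; case: (l \in x).
have ab : a != b.
  by apply/eqP=> E; have := in_flip a l' l'; rewrite -Hb -E eqxx; case: (l' \in a).
have xb : x != b.
  apply/eqP=> E; have := in_flip a l' l; rewrite -Hb -E (negbTE ll') Ha in_flip eqxx.
  by case: (l \in x).
have yx := xy; rewrite eq_sym in yx.
have ya := ay; rewrite eq_sym in ya.
have by_ := b_y; rewrite eq_sym in by_.
have ax := xa; rewrite eq_sym in ax.
have ba := ab; rewrite eq_sym in ba.
have bx := xb; rewrite eq_sym in bx.
move/negbTE: fx => fx; move/negbTE: fy => fy.
have Ha' : a = flip x l := Ha.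
have Hb' : b = flip a l' := Hb.
clear Hl Hl' Hl'' da Hd Ha Hb.
case fa: (f a); case fb: (f b).
-
  pose T0 := fun z => [&& f z, z != a & z != b].
  pose T1 := fun z => [|| T0 z, z == x | z == a].
  apply: (bequiv_trans (g := T0)).
    by apply: (remove_edge Hb'); rewrite /T0; [side|side|spec_tac].
  apply: (bequiv_trans (g := T1)).
    by apply: (add_edge Ha'); rewrite /T1 /T0; [side|side|spec_tac].
  by apply: (IH T1 g b y db); rewrite /T1 /T0; [side|side|move=> z; rewrite Hg; move: z; spec_tac].
- pose h1 := fun z => [|| f z, z == b | z == y].
  pose h2 := fun z => [&& h1 z, z != a & z != b].
  apply: (bequiv_trans (g := h1)).
    by apply: (IH f h1 b y db); [side|side|done].
  apply: (bequiv_trans (g := h2)).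
    by apply: (remove_edge Hb'); rewrite /h2 /h1; [side|side|spec_tac].
  by apply: (add_edge Ha'); rewrite /h2 /h1; [side|side|move=> z; rewrite Hg; move: z; spec_tac].
- pose h1 := fun z => [|| f z, z == x | z == a].
  pose h2 := fun z => [&& h1 z, z != a & z != b].
  apply: (bequiv_trans (g := h1)).
    by apply: (add_edge Ha'); rewrite /h1; [side|side|spec_tac].
  apply: (bequiv_trans (g := h2)).
    by apply: (remove_edge Hb'); rewrite /h2 /h1; [side|side|spec_tac].
  by apply: (IH h2 g b y db); rewrite /h2 /h1; [side|side|move=> z; rewrite Hg; move: z; spec_tac].
- pose h1 := fun z => [|| f z, z == b | z == y].
  pose h2 := fun z => [|| h1 z, z == x | z == a].
  apply: (bequiv_trans (g := h1)).
    by apply: (IH f h1 b y db); [side|side|done].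
  apply: (bequiv_trans (g := h2)).
    by apply: (add_edge Ha'); rewrite /h2 /h1; [side|side|spec_tac].
  by apply: (remove_edge Hb'); rewrite /h2 /h1; [rewrite Hg; side|rewrite Hg; side|move=> z; rewrite Hg; move: z; spec_tac].
Qed.

Lemma bot_equiv (f : bfun k) : (forall z, f z = false) -> bequiv f (@bot k).
Proof.
move=> Hf.
pose u : {set V} := set0.
pose w := flip u ord0.
have uw : u != w by apply/eqP=> E; have := in_flip u ord0 ord0; rewrite -/w -E eqxx inE.
pose h := fun z => (z == u) || (z == w).
apply: (bequiv_trans (g := h)).
  apply: (add_edge (u := u) (l := ord0) (w := w)) => //; rewrite ?Hf // => z.
  by rewrite Hf.
apply: (remove_edge (u := u) (l := ord0) (w := w)) => //.
Qed.

Lemma sd_odd x y : odd #|sd x y| = odd #|x| (+) odd #|y|.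
Proof.
have -> : sd x y = (x :\: y) :|: (y :\: x).
  by apply/setP=> z; rewrite in_sd !inE; case: (z \in x); case: (z \in y).
rewrite cardsU.
have -> : (x :\: y) :&: (y :\: x) = set0.
  by apply/setP=> z; rewrite !inE; case: (z \in x); case: (z \in y).
rewrite cards0 subn0 -(cardsID y x) -(cardsID x y) setIC !oddD.
by case: (odd _); case: (odd _); case: (odd _).
Qed.

Lemma final m : forall (f : bfun k), #|sat f| <= m -> eul f = 0%R -> bequiv f (@bot k).
Proof.
elim: m => [|m IH] f Hm He.
  apply: bot_equiv => z; apply/negbTE; apply/negP => fz.
  have : z \in sat f by rewrite inE.
  by move: Hm; rewrite leqn0 => /eqP/cards0_eq ->; rewrite inE.
case: (set_0Vmem (sat f)) => [E|[x Hx]].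
  apply: bot_equiv => z; apply/negbTE; apply/negP => fz.
  have : z \in sat f by rewrite inE.
  by rewrite E inE.
have fx : f x = true by rewrite inE in Hx.
case: (pickP [pred y | (y \in sat f) && (odd #|y| != odd #|x|)]) => [y /andP [Hy py] | none]; last first.
  exfalso.
  have E : eul f = (((-1) ^+ #|x|) *+ #|sat f|)%R.
    rewrite /eul -sumr_const; apply: eq_bigr => nu Hnu.
    rewrite -signr_odd; have := none nu; rewrite /= Hnu /= => /negbFE/eqP ->.
    by rewrite signr_odd.
  move: He; rewrite E => /eqP; rewrite mulrn_eq0 signr_eq0 orbF.
  by apply/negP; rewrite -lt0n card_gt0; apply/set0Pn; exists x.
have fy : f y = true by rewrite inE in Hy.
have xy : x != y by apply: contraNneq py => ->.
have yx := xy; rewrite eq_sym in yx.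
pose f' := fun z => [&& f z, z != x & z != y].
have po : odd #|x| (+) odd #|y| by move: py; case: (odd #|x|); case: (odd #|y|).
have key : bequiv f' f.
  apply: (@main (#|sd x y|./2) f' f x y).
  - by rewrite -[in LHS](odd_double_half #|sd x y|) sd_odd po add1n.
  - by rewrite /f' eqxx andbF.
  - by rewrite /f' eqxx !andbF.
  - rewrite /f'; spec_tac.
apply: (bequiv_trans (bequiv_sym key)); apply: IH.
  have Es : sat f = x |: (y |: sat f').
    apply/setP=> z; rewrite !inE /f'.
    case: (eqVneq z x) => [->|]; first by rewrite fx.
    case: (eqVneq z y) => [->|]; first by rewrite fy.
    by rewrite andbT.
  move: Hm; rewrite Es !cardsU1 !inE /f' !eqxx /= !andbF /=.
  by rewrite (negbTE xy) /= add1n ltnS => /ltnW.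
move: He; rewrite /eul (bigD1 x) //= (bigD1 y) /=; last by rewrite Hy yx.
have -> : (\sum_(i | (i \in sat f) && (i != x) && (i != y)) (-1) ^+ #|i| =
        \sum_(i in sat f') ((-1) ^+ #|i| : int))%R.
apply: eq_bigl => z; rewrite !inE /f'; by case: (f z).
rewrite addrA -(signr_odd _ #|x|) -(signr_odd _ #|y|).
by move: po; case: (odd #|x|); case: (odd #|y|) => //= _; rewrite ?expr0 ?expr1 ?subrr ?addNr ?add0r.
Qed.

End Proof.

Theorem proposition5p9 (k : nat) (hk : (1 <= k)%N) (phi : bfun k) :
  eul phi = 0%R -> bequiv phi (@bot k).
Proof. exact: (@final k #|sat phi| phi (leqnn _)). Qed.
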